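(* Let $H$ be an abelian group with a non-degenerate alternating $\mathbb{Z}$-bilinear form $\langle-,-\rangle$ (i.e. $\ker\mu=0$). Then there are isomorphisms \[ H_2(\mathbb{Q}[H])\longrightarrow H_2(\mathbb{Q}[H^{(1)}])\longrightarrow \mathbb{Q}\otimes_{\mathbb{Z}}H, \] the first being induced by the projection $\varpi^{(1)}:\mathbb{Q}[H]=\mathbb{Q}[\ker\mu]\oplus\mathbb{Q}[H^{(1)}]\to\mathbb{Q}[H^{(1)}]$.
   Context: $\mu:H\to\mathrm{Hom}_{\mathbb{Z}}(H,\mathbb{Z})$, $\mu(x)(y)=\langle x,y\rangle$; $H^{(1)}:=H\setminus\ker\mu$. $\mathbb{Q}[S]$ ($S\subset H$) is the $\mathbb{Q}$-vector space with basis symbols $[x]$, $x\in S$; $\mathbb{Q}[H]$ is a Lie algebra via $[[x],[y]]=\langle x,y\rangle[x+y]$, $\mathbb{Q}[H^{(1)}]$ is its derived subalgebra (a Lie subalgebra; it is $0$ if $H^{(1)}=\emptyset$) and $\mathbb{Q}[\ker\mu]$ its center, and $\varpi^{(1)}$ is a Lie algebra homomorphism. $H_2$ denotes Lie algebra homology with trivial coefficients $\mathbb{Q}$ (Chevalley–Eilenberg complex). *)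

(* Defs.v *)
(* Chevalley--Eilenberg chains in low degrees for the Lie
   algebra Q[H] (basis [x], x in H, bracket [[x],[y]] = <x,y>[x+y]) and its
   Lie subalgebras Q[S], S a subset of H closed enough (here S = H or H^(1)).
   Chains are finite formal Q-linear combinations (sequences); their value in
   Q[H], /\^2 Q[H] resp. Q (x)_Z H is given by coefficient functions /
   explicit relations. *)
From HB Require Import structures.
From mathcomp Require Import all_boot all_order all_algebra.
From mathcomp Require Import boolp.
Set Implicit Arguments. Unset Strict Implicit. Unset Printing Implicit Defensive.
Import Order.TTheory GRing.Theory Num.Theory.
Local Open Scope ring_scope.

Section CE.
Variable H : zmodType.
Variable form : H -> H -> int.

(* 1-chains: sum of q [x];  2-chains: sum of q [x]/\[y];
   3-chains: sum of q [x]/\[y]/\[z].  Also used for Q (x)_Z H: sum of q (x) x. *)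
Definition chain1 := seq (rat * H).
Definition chain2 := seq (rat * H * H).
Definition chain3 := seq (rat * H * H * H).

Definition coef1 (c : chain1) (a : H) : rat :=
  \sum_(t <- c) (if t.2 == a then t.1 else 0).

(* coefficient of [a]/\[b] (as an alternating function of (a,b)) in a
   2-chain; two 2-chains are equal in /\^2 Q[H] iff these agree. *)
Definition coef2 (c : chain2) (a b : H) : rat :=
  \sum_(t <- c) t.1.1 * (((t.1.2 == a) && (t.2 == b))%:R
                         - ((t.1.2 == b) && (t.2 == a))%:R).

Definition eq2 (c c' : chain2) : Prop := forall a b, coef2 c a b = coef2 c' a b.

Definition scale1 (k : rat) (c : chain1) : chain1 :=
  [seq (k * t.1, t.2) | t <- c].
Definition sub1 (c c' : chain1) : chain1 := c ++ scale1 (-1) c'.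
Definition scale2 (k : rat) (c : chain2) : chain2 :=
  [seq (k * t.1.1, t.1.2, t.2) | t <- c].
Definition add2 (c c' : chain2) : chain2 := c ++ c'.
Definition sub2 (c c' : chain2) : chain2 := c ++ scale2 (-1) c'.

Definition br (x y : H) : rat := (form x y)%:~R.

(* Chevalley--Eilenberg differentials (up to a global sign, irrelevant for
   kernels and images):
   d2 ([x]/\[y]) = [[x],[y]]
   d3 ([x]/\[y]/\[z]) = [[x],[y]]/\[z] - [[x],[z]]/\[y] + [[y],[z]]/\[x] *)
Definition d2 (c : chain2) : chain1 :=
  [seq (t.1.1 * br t.1.2 t.2, t.1.2 + t.2) | t <- c].
Definition d3 (c : chain3) : chain2 :=
  flatten [seq let: (q, x, y, z) := t in
               [:: (q * br x y, x + y, z); (- (q * br x z), x + z, y);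
                   (q * br y z, y + z, x)] | t <- c].

(* chains of the Lie subalgebra Q[S] : all basis elements in S *)
Definition supp2 (S : pred H) (c : chain2) : bool :=
  all (fun t => S t.1.2 && S t.2) c.
Definition supp3 (S : pred H) (c : chain3) : bool :=
  all (fun t => [&& S t.1.1.2, S t.1.2 & S t.2]) c.

Definition cycle2 (S : pred H) (c : chain2) : Prop :=
  supp2 S c /\ forall a, coef1 (d2 c) a = 0.
Definition bound2 (S : pred H) (c : chain2) : Prop :=
  exists t : chain3, supp3 S t /\ eq2 c (d3 t).

Definition H1 : pred H := fun x => `[< exists y, form x y != 0 >].

(* /\^2 of the projection varpi^(1) : Q[H] -> Q[H^(1)] *)
Definition proj2 (c : chain2) : chain2 := [seq t <- c | H1 t.1.2 && H1 t.2].

(* Q (x)_Z H = Q[H] / span{ [x+y] - [x] - [y] }  (Q (x)_Z - is right exact) *)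
Definition tens_rel (r : chain2) : chain1 :=
  flatten [seq let: (q, x, y) := t in [:: (q, x + y); (- q, x); (- q, y)]
          | t <- r].
Definition tzero (c : chain1) : Prop :=
  exists r : chain2, forall a, coef1 c a = coef1 (tens_rel r) a.

End CE.

(* Main.v *)
Require Import Defs.
From HB Require Import structures.
From mathcomp Require Import all_boot all_order all_algebra.
From mathcomp Require Import boolp.
From mathcomp Require Import ring lra zify.
Set Implicit Arguments. Unset Strict Implicit. Unset Printing Implicit Defensive.
Import Order.TTheory GRing.Theory Num.Theory.
Local Open Scope ring_scope.

Notation coef1 := Defs.coef1.

Section Work.
Variable H : zmodType.
Variable form : H -> H -> int.
Hypothesis form_addl : forall x y z, form (x + y) z = form x z + form y z.
Hypothesis form_addr : forall x y z, form x (y + z) = form x y + form x z.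
Hypothesis form_alt : forall x, form x x = 0.
Hypothesis form_nondeg : forall x, (forall y, form x y = 0) -> x = 0.

Lemma form0l y : form 0 y = 0.
Proof. have := form_addl 0 0 y; rewrite addr0; lia. Qed.
Lemma form0r y : form y 0 = 0.
Proof. have := form_addr y 0 0; rewrite addr0; lia. Qed.
Lemma formNl x y : form (- x) y = - form x y.
Proof. have := form_addl (- x) x y; rewrite addNr form0l; lia. Qed.
Lemma formNr x y : form x (- y) = - form x y.
Proof. have := form_addr x (- y) y; rewrite addNr form0r; lia. Qed.
Lemma formBl x y z : form (x - y) z = form x z - form y z.
Proof. by rewrite form_addl formNl. Qed.
Lemma formBr x y z : form x (y - z) = form x y - form x z.
Proof. by rewrite form_addr formNr. Qed.
Lemma form_anti x y : form y x = - form x y.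
Proof. have := form_alt (x + y); rewrite form_addl !form_addr !form_alt add0r addr0.
lia. Qed.

Lemma H1E u : H1 form u = (u != 0).
Proof.
apply/idP/idP.
- move/asboolP => [y hy]; apply/eqP => u0; move: hy; by rewrite u0 form0l.
- move=> hu; apply/asboolP; apply: contrapT => hn; move/eqP: hu; apply.
  apply: form_nondeg => y; apply/eqP; apply: contrapT => hy; apply: hn; exists y.
  exact/negP.
Qed.

Lemma nz_l z w : form z w != 0 -> z != 0.
Proof. by apply: contra => /eqP ->; rewrite form0l. Qed.
Lemma nz_r z w : form w z != 0 -> z != 0.
Proof. by apply: contra => /eqP ->; rewrite form0r. Qed.

Local Notation br := (br form).

Lemma brDl x y z : br (x + y) z = br x z + br y z.
Proof. by rewrite /br form_addl intrD. Qed.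
Lemma brDr x y z : br x (y + z) = br x y + br x z.
Proof. by rewrite /br form_addr intrD. Qed.
Lemma brNl x y : br (- x) y = - br x y.
Proof. by rewrite /br formNl mulrNz. Qed.
Lemma brNr x y : br x (- y) = - br x y.
Proof. by rewrite /br formNr mulrNz. Qed.
Lemma brBl x y z : br (x - y) z = br x z - br y z.
Proof. by rewrite brDl brNl. Qed.
Lemma brBr x y z : br x (y - z) = br x y - br x z.
Proof. by rewrite brDr brNr. Qed.
Lemma brxx x : br x x = 0.
Proof. by rewrite /br form_alt. Qed.
Lemma br0l x : br 0 x = 0.
Proof. by rewrite /br form0l. Qed.
Lemma br0r x : br x 0 = 0.
Proof. by rewrite /br form0r. Qed.
Lemma br_anti x y : br y x = - br x y.
Proof. by rewrite /br form_anti mulrNz. Qed.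
Lemma br_neq0 x y : (br x y != 0) = (form x y != 0).
Proof. by rewrite /br intr_eq0. Qed.

Definition w (u v p r : H) : rat :=
  ((u == p) && (v == r))%:R - ((u == r) && (v == p))%:R.

Lemma w_anti u v p r : w v u p r = - w u v p r.
Proof. by rewrite /w [(v == p) && _]andbC [(v == r) && _]andbC opprB. Qed.
Lemma wuu u p r : w u u p r = 0.
Proof. by rewrite /w andbC subrr. Qed.

Lemma coef2E (c : chain2 H) p r : coef2 c p r = \sum_(t <- c) t.1.1 * w t.1.2 t.2 p r.
Proof. by []. Qed.
Lemma coef2_cat (c c' : chain2 H) p r : coef2 (c ++ c') p r = coef2 c p r + coef2 c' p r.
Proof. by rewrite !coef2E big_cat. Qed.
Lemma coef2_cons t (c : chain2 H) p r : coef2 (t :: c) p r = t.1.1 * w t.1.2 t.2 p r + coef2 c p r.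
Proof. by rewrite !coef2E big_cons. Qed.
Lemma coef2_nil p r : coef2 ([::] : chain2 H) p r = 0.
Proof. by rewrite coef2E big_nil. Qed.
Lemma coef2_scale k (c : chain2 H) p r : coef2 (scale2 k c) p r = k * coef2 c p r.
Proof. rewrite !coef2E big_map mulr_sumr; apply: eq_bigr => t _ /=; ring. Qed.

Definition d3term (s : rat * H * H * H) p r : rat :=
  let: (q, x, y, z) := s in
  q * br x y * w (x + y) z p r - q * br x z * w (x + z) y p r + q * br y z * w (y + z) x p r.

Lemma coef2_d3 (t : chain3 H) p r : coef2 (d3 form t) p r = \sum_(s <- t) d3term s p r.
Proof.
elim: t => [|s t IH]; first by rewrite /d3 /= coef2_nil big_nil.
rewrite big_cons -IH /d3 /= coef2_cat; congr (_ + _).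
case: s => [[[q x] y] z] /=; rewrite !coef2_cons coef2_nil /=; ring.
Qed.


Definition Bnd (S : pred H) (F : H -> H -> rat) :=
  exists t : chain3 H, supp3 S t /\ forall p r, F p r = coef2 (d3 form t) p r.

Definition scale3 (k : rat) (t : chain3 H) : chain3 H :=
  [seq (k * s.1.1.1, s.1.1.2, s.1.2, s.2) | s <- t].

Lemma Bnd0 S : Bnd S (fun _ _ => 0).
Proof. by exists [::]; split => // p r; rewrite coef2_d3 big_nil. Qed.

Lemma Bnd_ext S F G : (forall p r, F p r = G p r) -> Bnd S G -> Bnd S F.
Proof. by move=> e [t [ht1 ht2]]; exists t; split => // p r; rewrite e ht2. Qed.

Lemma Bnd_add S F G : Bnd S F -> Bnd S G -> Bnd S (fun p r => F p r + G p r).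
Proof.
move=> [t [ht1 ht2]] [t' [ht1' ht2']]; exists (t ++ t'); split.
  by rewrite /supp3 all_cat; apply/andP.
by move=> p r; rewrite coef2_d3 big_cat -!coef2_d3 ht2 ht2'.
Qed.

Lemma Bnd_scale S k F : Bnd S F -> Bnd S (fun p r => k * F p r).
Proof.
move=> [t [ht1 ht2]]; exists (scale3 k t); split.
  by rewrite /supp3 all_map; apply: sub_all ht1 => s.
move=> p r; rewrite ht2 !coef2_d3 big_map mulr_sumr; apply: eq_bigr => s _.
case: s => [[[q x] y] z] /=; ring.
Qed.

Lemma Bnd_opp S F : Bnd S F -> Bnd S (fun p r => - F p r).
Proof. move=> h; apply: Bnd_ext (Bnd_scale (-1) h) => p r; ring. Qed.

Lemma Bnd_sub S F G : Bnd S F -> Bnd S G -> Bnd S (fun p r => F p r - G p r).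
Proof. by move=> hF hG; apply: Bnd_add hF (Bnd_opp hG). Qed.

Lemma Bnd_sum S (I : eqType) (s : seq I) (F : I -> H -> H -> rat) :
  (forall i, i \in s -> Bnd S (F i)) -> Bnd S (fun p r => \sum_(i <- s) F i p r).
Proof.
elim: s => [|i s IH] h.
  by apply: Bnd_ext (Bnd0 S) => p r; rewrite big_nil.
apply: Bnd_ext (Bnd_add (h i (mem_head _ _)) (IH _)) => [p r|]; first by rewrite big_cons.
by move=> j js; apply: h; rewrite in_cons js orbT.
Qed.

Lemma Bnd_mono (S S' : pred H) F : (forall x, S x -> S' x) -> Bnd S F -> Bnd S' F.
Proof.
move=> hS [t [ht1 ht2]]; exists t; split => //; apply: sub_all ht1 => s /and3P[a b c].
by rewrite !hS.
Qed.

Lemma Bnd_single (S : pred H) q x y z : S x -> S y -> S z -> Bnd S (d3term (q, x, y, z)).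
Proof.
move=> hx hy hz; exists [:: (q, x, y, z)]; split; first by rewrite /supp3 /= hx hy hz.
by move=> p r; rewrite coef2_d3 big_seq1.
Qed.

Lemma Tg g q x y p r : d3term (q, x, y, g - (x + y)) p r =
  q * (br x y * w (x + y) (g - (x + y)) p r + (br x g - br x y) * w y (g - y) p r
       - (br y g + br x y) * w x (g - x) p r).
Proof.
have e1 : x + (g - (x + y)) = g - y by rewrite opprD addrCA addNKr.
have e2 : y + (g - (x + y)) = g - x by rewrite opprD addrCA [- x - y]addrC addNKr.
rewrite /d3term e1 e2 (w_anti (g - y)) (w_anti (g - x)) !brBr !brDr !brxx (br_anti y x).
ring.
Qed.

Ltac nzby w := apply: (@nz_l _ w); rewrite ?formBl ?form_addl ?formNl ?form_alt; lia.

Lemma Rlem g x x1 : x != 0 -> form g x1 != 0 -> form (g - x) x1 != 0 -> form x x1 != 0 ->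
  Bnd (H1 form) (fun p r => br x1 g * w x (g - x) p r - br x g * w x1 (g - x1) p r).
Proof.
move=> hx hA hB hC; rewrite formBl in hB.
have Ha : br x1 g != 0 by rewrite br_neq0 form_anti oppr_eq0.
have Hac : br x1 g + br x x1 != 0.
  by rewrite (br_anti x1 x) -brBr br_neq0 form_anti oppr_eq0 formBl.
have n1 : x1 != 0 := nz_r hA.
have n2 : x1 + x1 != 0.
  apply: (@nz_r _ g); rewrite form_addr; lia.
have n3 : g - (x1 + (x1 + x1)) != 0 by nzby x1.
have n4 : g - (x + x1) != 0 by nzby x1.
have n5 : x + x1 != 0 by nzby x1.
have n6 : g - (x + x1 + x1) != 0 by nzby x1.
have n7 : g - (x + (x1 + x1)) != 0 by nzby x1.
have hh : forall u, u != 0 -> H1 form u by move=> u; rewrite H1E.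
have B1 := Bnd_single 1 (hh _ n1) (hh _ n2) (hh _ n3).
have B2 := Bnd_single 1 (hh _ hx) (hh _ n1) (hh _ n4).
have B3 := Bnd_single 1 (hh _ n5) (hh _ n1) (hh _ n6).
have B4 := Bnd_single 1 (hh _ hx) (hh _ n2) (hh _ n7).
set a := br x1 g; set al := br x g; set c := br x x1.
have := Bnd_add (Bnd_add (Bnd_scale (a + c) B2) (Bnd_scale c B3))
   (Bnd_add (Bnd_scale (- (c / 2)) B4) (Bnd_scale (c * (al - 2 * c) / (2 * a)) B1)).
move/(Bnd_scale (- (a + c)^-1)); apply: Bnd_ext => p r.
rewrite !Tg [x + (x1 + x1)]addrA.
rewrite !brDl !brDr !brxx -/a -/al -/c.
by field; apply/andP; split; [exact: Ha | exact: Hac].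
Qed.

Lemma int_aux (A B : int) (N : nat) : A != 0 -> (`|A| < N)%N -> A + B *+ N != 0.
Proof.
move=> hA hN; apply/eqP => e.
have eA : A = - (B *+ N) by apply/eqP; rewrite -addr_eq0 e.
move: hN; rewrite eA abszN -mulr_natr abszM natz absz_nat => h.
have B0 : `|B|%N = 0%N by nia.
move: hA; rewrite eA; move/eqP: B0; rewrite absz_eq0 => /eqP ->.
by rewrite mul0rn oppr0 eqxx.
Qed.

Lemma sum_ge (s : seq H) (F : H -> nat) u : u \in s -> (F u <= \sum_(y <- s) F y)%N.
Proof. by move=> hu; rewrite (big_rem u) //= leq_addr. Qed.

Lemma form_mulrn u v n : form u (v *+ n) = form u v *+ n.
Proof. elim: n => [|n IH]; first by rewrite !mulr0n form0r. by rewrite !mulrS form_addr IH. Qed.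

Lemma avoid (s : seq H) : all (fun u => u != 0) s ->
  exists w0, forall u, u \in s -> form u w0 != 0.
Proof.
elim: s => [|u s IH]; first by exists 0.
move=> /andP[hu hs]; have [w0 hw0] := IH hs.
have := hu; rewrite -H1E => /asboolP [v hv].
have [h0|h0] := eqVneq (form u w0) 0; last first.
  by exists w0 => u'; rewrite in_cons => /orP[/eqP ->|]; [|exact: hw0].
set N := (\sum_(y <- s) `|form y w0|%N).+1.
exists (w0 + v *+ N) => u'; rewrite in_cons form_addr form_mulrn => /orP[/eqP ->|hu'].
  by rewrite h0 add0r mulrn_eq0 negb_or hv.
apply: int_aux; first exact: hw0.
by rewrite /N ltnS (sum_ge (fun y => `|form y w0|%N)).
Qed.

Lemma hH1 u : u != 0 -> H1 form u.
Proof. by rewrite H1E. Qed.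

Definition E0 u p r := w u (- u) p r.
Lemma E00 p r : E0 0 p r = 0.
Proof. by rewrite /E0 oppr0 wuu. Qed.
Lemma E0N u p r : E0 (- u) p r = - E0 u p r.
Proof. by rewrite /E0 opprK w_anti. Qed.

Lemma Dlem u v : form u v != 0 ->
  Bnd (H1 form) (fun p r => E0 (u + v) p r - E0 u p r - E0 v p r).
Proof.
move=> huv.
have nu : u != 0 := nz_l huv.
have nv : v != 0 by apply: (@nz_l _ u); rewrite form_anti oppr_eq0.
have nuv : 0 - (u + v) != 0.
  by apply: (@nz_l _ v); rewrite sub0r formNl form_addl form_alt addr0 oppr_eq0.
have hb : br u v != 0 by rewrite br_neq0.
have := Bnd_single (br u v)^-1 (hH1 nu) (hH1 nv) (hH1 nuv).
apply: Bnd_ext => p r; rewrite Tg !sub0r /E0 !br0r; field; exact: hb.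
Qed.

Lemma L1 x y : Bnd (H1 form) (fun p r => E0 (x + y) p r - E0 x p r - E0 y p r).
Proof.
have [->|nx] := eqVneq x 0.
  by apply: Bnd_ext (Bnd0 _) => p r; rewrite add0r E00; ring.
have [->|ny] := eqVneq y 0.
  by apply: Bnd_ext (Bnd0 _) => p r; rewrite addr0 E00; ring.
have [exy|nxy] := eqVneq (x + y) 0.
  have -> : x = - y by apply/eqP; rewrite -addr_eq0 exy.
  by apply: Bnd_ext (Bnd0 _) => p r; rewrite addNr E00 E0N; ring.
have [f0|fn] := eqVneq (form x y) 0; last exact: Dlem.
have [w0 hw0] := @avoid [:: x; y; x + y] ltac:(by rewrite /= nx ny nxy).
have h1 : form x (y + w0) != 0 by rewrite form_addr f0 add0r hw0 // inE eqxx.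
have h2 : form y w0 != 0 by rewrite hw0 // !inE eqxx orbT.
have h3 : form (x + y) w0 != 0 by rewrite hw0 // !inE eqxx !orbT.
have := Bnd_sub (Bnd_add (Dlem h1) (Dlem h2)) (Dlem h3).
apply: Bnd_ext => p r; rewrite [x + (y + w0)]addrA; ring.
Qed.

Definition TZ (F : H -> rat) := exists r : chain2 H, forall a, F a = coef1 (tens_rel r) a.

Lemma coef1E (c : chain1 H) a : coef1 c a = \sum_(t <- c) t.1 * (t.2 == a)%:R.
Proof. by apply: eq_bigr => t _; case: (t.2 == a); rewrite ?mulr1 ?mulr0. Qed.
Lemma coef1_cat (c c' : chain1 H) a : coef1 (c ++ c') a = coef1 c a + coef1 c' a.
Proof. by rewrite !coef1E big_cat. Qed.
Lemma coef1_scale k (c : chain1 H) a : coef1 (scale1 k c) a = k * coef1 c a.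
Proof. rewrite !coef1E big_map mulr_sumr; apply: eq_bigr => t _ /=; ring. Qed.
Lemma coef1_sub (c c' : chain1 H) a : coef1 (sub1 c c') a = coef1 c a - coef1 c' a.
Proof. by rewrite /sub1 coef1_cat coef1_scale; ring. Qed.

Definition scaleR (k : rat) (r : chain2 H) : chain2 H := [seq (k * s.1.1, s.1.2, s.2) | s <- r].

Lemma tens_rel_cat (r r' : chain2 H) : tens_rel (r ++ r') = tens_rel r ++ tens_rel r'.
Proof. by rewrite /tens_rel map_cat flatten_cat. Qed.

Lemma coef1_tens_scale k r a : coef1 (tens_rel (scaleR k r)) a = k * coef1 (tens_rel r) a.
Proof.
elim: r => [|[[q x] y] r IH]; first by rewrite /= /coef1 !big_nil mulr0.
rewrite /= -cat1s tens_rel_cat coef1_cat IH [tens_rel (_ :: r)]/tens_rel /= -/(tens_rel r).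
rewrite -cat1s coef1_cat !coef1E !big_cons !big_nil /=; ring.
Qed.

Lemma TZ0 : TZ (fun _ => 0).
Proof. by exists [::] => a; rewrite /coef1 big_nil. Qed.
Lemma TZ_ext F G : (forall a, F a = G a) -> TZ G -> TZ F.
Proof. by move=> e [r hr]; exists r => a; rewrite e hr. Qed.
Lemma TZ_add F G : TZ F -> TZ G -> TZ (fun a => F a + G a).
Proof. by move=> [r hr] [r' hr']; exists (r ++ r') => a; rewrite tens_rel_cat coef1_cat hr hr'. Qed.
Lemma TZ_scale k F : TZ F -> TZ (fun a => k * F a).
Proof. by move=> [r hr]; exists (scaleR k r) => a; rewrite coef1_tens_scale hr. Qed.
Lemma TZ_sub F G : TZ F -> TZ G -> TZ (fun a => F a - G a).
Proof. move=> hF hG; apply: TZ_ext (TZ_add hF (TZ_scale (-1) hG)) => a; ring. Qed.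
Lemma TZ_sum (I : eqType) (s : seq I) (F : I -> H -> rat) :
  (forall i, i \in s -> TZ (F i)) -> TZ (fun a => \sum_(i <- s) F i a).
Proof.
elim: s => [|i s IH] h; first by apply: TZ_ext TZ0 => a; rewrite big_nil.
apply: TZ_ext (TZ_add (h i (mem_head _ _)) (IH _)) => [a|]; first by rewrite big_cons.
by move=> j js; apply: h; rewrite in_cons js orbT.
Qed.

Lemma TZ_triple u v z : u + v + z = 0 ->
  TZ (fun a => (u == a)%:R + (v == a)%:R + (z == a)%:R).
Proof.
move=> e; exists [:: (-1, u, v); (-1, u + v, z); (-1, 0, 0)] => a.
rewrite /tens_rel /= !coef1E !big_cons big_nil /= e addr0; ring.
Qed.

Lemma TZ_zero : TZ (fun a => (0 == a)%:R).
Proof.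
exists [:: (-1, 0, 0)] => a; rewrite /tens_rel /= !coef1E !big_cons big_nil /= addr0; ring.
Qed.

Lemma TZ_pair x : TZ (fun a => (x == a)%:R + (- x == a)%:R).
Proof.
apply: TZ_ext (TZ_sub (TZ_triple (u := x) (v := - x) (z := 0) _) TZ_zero) => [a|]; first ring.
by rewrite addrN addr0.
Qed.

Definition fmap (c : chain2 H) : chain1 H :=
  flatten [seq (if t.1.2 + t.2 == 0 then [:: (t.1.1 / 2, t.1.2); (- (t.1.1 / 2), t.2)]
                else [::]) | t <- c].

Lemma wdeg u v a : u + v != 0 -> w u v a (- a) = 0.
Proof.
move=> h; rewrite /w.
have -> : ((u == a) && (v == - a)) = false.
  by apply/negP => /andP[/eqP eu /eqP ev]; move: h; rewrite eu ev addrN eqxx.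
have -> : ((u == - a) && (v == a)) = false.
  by apply/negP => /andP[/eqP eu /eqP ev]; move: h; rewrite eu ev addNr eqxx.
by rewrite subrr.
Qed.

Lemma E0a u a : E0 u a (- a) = (u == a)%:R - (- u == a)%:R.
Proof. by rewrite /E0 /w eqr_opp -eqr_oppLR !andbb. Qed.

Lemma coef1_f c a : coef1 (fmap c) a = coef2 c a (- a) / 2.
Proof.
elim: c => [|[[q x] y] c IH]; first by rewrite /fmap /= coef2_nil /coef1 big_nil mul0r.
rewrite /fmap /= -/(fmap c) coef1_cat IH coef2_cons /=.
have [e|ne] := eqVneq (x + y) 0.
  have -> : y = - x by apply/eqP; rewrite -addr_eq0 addrC e.
  have := E0a x a; rewrite /E0 => ->.
  rewrite !coef1E !big_cons big_nil /=; ring.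
by rewrite wdeg // /coef1 big_nil; ring.
Qed.

Lemma E0a' u a : w u (- u) a (- a) = (u == a)%:R - (- u == a)%:R.
Proof. exact: E0a. Qed.

Lemma coef2_sub (c c' : chain2 H) p r : coef2 (sub2 c c') p r = coef2 c p r - coef2 c' p r.
Proof. by rewrite /sub2 coef2_cat coef2_scale; ring. Qed.

Lemma TZ_d3 s : TZ (fun a => d3term s a (- a)).
Proof.
case: s => [[[q x] y] z].
have [e|ne] := eqVneq (x + y + z) 0.
  have -> : z = 0 - (x + y) by apply/eqP; rewrite sub0r -addr_eq0 addrC e.
  have T1 := @TZ_triple (- x) (- y) (x + y) ltac:(by rewrite -opprD addNr).
  have T2 := @TZ_triple x y (- (x + y)) ltac:(by rewrite addrN).
  apply: TZ_ext (TZ_scale (q * br x y) (TZ_sub T1 T2)) => a.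
  rewrite Tg !br0r !sub0r !E0a'; ring.
have n2 : x + z + y != 0 by rewrite addrAC.
have n3 : y + z + x != 0 by rewrite addrC addrA.
apply: TZ_ext TZ0 => a; rewrite /d3term (wdeg _ ne) (wdeg _ n2) (wdeg _ n3); ring.
Qed.

Lemma P2a c c' t : eq2 (sub2 c c') (d3 form t) -> tzero (sub1 (fmap c) (fmap c')).
Proof.
move=> ht.
suff : TZ (fun a => coef1 (sub1 (fmap c) (fmap c')) a) by [].
apply: TZ_ext (TZ_scale (1/2) (TZ_sum (s := t) (fun s _ => TZ_d3 s))) => a.
rewrite coef1_sub !coef1_f -coef2_d3 -ht coef2_sub; ring.
Qed.

Lemma P2b k c c' : tzero (sub1 (fmap (add2 (scale2 k c) c')) (scale1 k (fmap c) ++ fmap c')).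
Proof.
suff : TZ (fun a => coef1 (sub1 (fmap (add2 (scale2 k c) c')) (scale1 k (fmap c) ++ fmap c')) a) by [].
apply: TZ_ext TZ0 => a.
rewrite coef1_sub coef1_cat coef1_scale !coef1_f /add2 coef2_cat coef2_scale; ring.
Qed.

Lemma P2d (t : chain1 H) : exists c, cycle2 form (H1 form) c /\ tzero (sub1 (fmap c) t).
Proof.
exists [seq (s.1, s.2, - s.2) | s <- t & s.2 != 0]; split; first split.
- rewrite /supp2 all_map; apply/allP => s; rewrite mem_filter => /andP[hs _] /=.
  by rewrite !hH1 // oppr_eq0.
- move=> a; rewrite coef1E /d2 !big_map big1 // => s _ /=.
  by rewrite brNr brxx oppr0 mulr0 mul0r.
suff : TZ (fun a => coef1 (sub1 (fmap [seq (s.1, s.2, - s.2) | s <- t & s.2 != 0]) t) a) by [].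
have key : forall a, coef1 (sub1 (fmap [seq (s.1, s.2, - s.2) | s <- t & s.2 != 0]) t) a =
  \sum_(s <- t) ((if s.2 != 0 then s.1 * w s.2 (- s.2) a (- a) else 0) / 2 - s.1 * (s.2 == a)%:R).
  move=> a; rewrite coef1_sub coef1_f coef2E big_map big_filter big_mkcond /= coef1E.
  by rewrite sumrB -mulr_suml.
apply: TZ_ext key _; apply: TZ_sum => s _.
have [->|ns] := eqVneq s.2 0.
  by apply: TZ_ext (TZ_scale (- s.1) TZ_zero) => a /=; ring.
apply: TZ_ext (TZ_scale (- s.1 / 2) (TZ_pair s.2)) => a /=.
by rewrite E0a'; field.
Qed.

Lemma castA (a b : bool) : ((a && b)%:R : rat) = a%:R * b%:R.
Proof. by case: a; case: b; rewrite ?mul1r ?mul0r. Qed.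

Lemma indic (F : H -> H -> rat) x y p r :
  ((x == p) && (y == r))%:R * F x y = ((x == p) && (y == r))%:R * F p r.
Proof. by case: (x =P p) => [->|]; case: (y =P r) => [->|] //=; rewrite !mul0r. Qed.

Definition M (p r : H) : rat := ((p != 0) && (r != 0))%:R.

Lemma maskw x y p r : M x y * w x y p r = M p r * w x y p r.
Proof.
have i1 := indic M x y p r; have i2 := indic M x y r p.
have Ms : M r p = M p r by rewrite /M andbC.
rewrite Ms in i2; rewrite /w.
transitivity (((x == p) && (y == r))%:R * M x y - ((x == r) && (y == p))%:R * M x y); first ring.
rewrite i1 i2; ring.
Qed.

Lemma mterm a b v p r : v != 0 -> M p r * (br a b * w (a + b) v p r) = br a b * w (a + b) v p r.
Proof.
move=> hv; rewrite mulrCA -maskw.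
have [e|ne] := eqVneq (a + b) 0.
  have -> : b = - a by apply/eqP; rewrite -addr_eq0 addrC e.
  by rewrite brNr brxx oppr0 !mul0r ?mulr0.
by rewrite /M ne hv mul1r.
Qed.

Lemma mzero u p r : M p r * w u 0 p r = 0.
Proof. by rewrite -maskw /M eqxx andbF mul0r. Qed.

Lemma maskd3 s : Bnd (H1 form) (fun p r => M p r * d3term s p r).
Proof.
case: s => [[[q x] y] z].
have e : forall x y z p r, M p r * d3term (q, x, y, z) p r =
   q * (M p r * (br x y * w (x + y) z p r)) - q * (M p r * (br x z * w (x + z) y p r))
   + q * (M p r * (br y z * w (y + z) x p r)) by move=> ? ? ? p r; rewrite /d3term; ring.
have [->|nx] := eqVneq x 0.
  by apply: Bnd_ext (Bnd0 _) => p r; rewrite e !br0l [M p r * (br y z * _)]mulrCA mzero; ring.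
have [->|ny] := eqVneq y 0.
  by apply: Bnd_ext (Bnd0 _) => p r; rewrite e !br0l !br0r [M p r * (_ * w (x + z) 0 p r)]mulrCA mzero; ring.
have [->|nz] := eqVneq z 0.
  by apply: Bnd_ext (Bnd0 _) => p r; rewrite e !br0r [M p r * (_ * w (x + y) 0 p r)]mulrCA mzero; ring.
apply: Bnd_ext (Bnd_single q (hH1 nx) (hH1 ny) (hH1 nz)) => p r.
by rewrite e !mterm // /d3term; ring.
Qed.

Lemma coef2_proj z p r : coef2 (proj2 form z) p r = M p r * coef2 z p r.
Proof.
rewrite !coef2E /proj2 big_filter big_mkcond mulr_sumr; apply: eq_bigr => t _.
rewrite !H1E mulrCA -maskw /M; by case: ifP; rewrite ?mul1r ?mul0r ?mulr0.
Qed.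

Lemma P1a z : cycle2 form predT z -> cycle2 form (H1 form) (proj2 form z).
Proof.
move=> [_ hz]; split.
  by apply/allP => t; rewrite mem_filter => /andP[].
move=> a; rewrite -(hz a) !coef1E /d2 !big_map /proj2 big_filter big_mkcond.
apply: eq_bigr => t _; case: ifP => // /negbT; rewrite !H1E negb_and !negbK.
by case/orP => /eqP ->; rewrite ?br0l ?br0r !mulr0 mul0r.
Qed.

Lemma P1b z : bound2 form predT z -> bound2 form (H1 form) (proj2 form z).
Proof.
move=> [t [_ ht]].
suff : Bnd (H1 form) (fun p r => coef2 (proj2 form z) p r) by [].
apply: Bnd_ext (Bnd_sum (s := t) (fun s _ => maskd3 s)) => p r.
by rewrite coef2_proj ht coef2_d3 mulr_sumr.
Qed.

Lemma P1c z' : cycle2 form (H1 form) z' ->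
  exists z, cycle2 form predT z /\ bound2 form (H1 form) (sub2 (proj2 form z) z').
Proof.
move=> [hs hz]; exists z'; split; first by split => //; apply/allP.
have -> : proj2 form z' = z' by apply/all_filterP.
suff : Bnd (H1 form) (fun p r => coef2 (sub2 z' z') p r) by [].
by apply: Bnd_ext (Bnd0 _) => p r; rewrite coef2_sub subrr.
Qed.

Lemma w0y y : Bnd predT (fun p r => w 0 y p r).
Proof.
have [->|ny] := eqVneq y 0.
  by apply: Bnd_ext (Bnd0 _) => p r; rewrite wuu.
have := ny; rewrite -H1E => /asboolP [v hv].
have hb : br v y != 0 by rewrite br_neq0 form_anti oppr_eq0.
apply: Bnd_ext (Bnd_single (S := predT) (- (br v y)^-1) (x := 0) (y := v) (z := y - (0 + v)) _ _ _) => //.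
move=> p r; rewrite Tg !br0l [y - 0]subr0; field; exact: hb.
Qed.

Lemma P1d z : cycle2 form predT z -> bound2 form (H1 form) (proj2 form z) -> bound2 form predT z.
Proof.
move=> _ hb.
have hb' : Bnd predT (fun p r => coef2 (proj2 form z) p r) by apply: Bnd_mono hb.
suff : Bnd predT (fun p r => coef2 z p r) by [].
have hrest : Bnd predT (fun p r => \sum_(t <- z)
   (if ~~ ((t.1.2 != 0) && (t.2 != 0)) then t.1.1 * w t.1.2 t.2 p r else 0)).
  apply: Bnd_sum => t _.
  have [hc|hc] := boolP (~~ ((t.1.2 != 0) && (t.2 != 0))); last first.
    exact: Bnd0.
  have hw : Bnd predT (fun p r => t.1.1 * w t.1.2 t.2 p r).
    move: hc; rewrite negb_and !negbK; case/orP => /eqP e.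
      by rewrite e; apply: Bnd_scale; exact: w0y.
    rewrite e; apply: Bnd_ext (Bnd_scale (- t.1.1) (w0y t.1.2)) => p r; rewrite w_anti; ring.
  exact: hw.
apply: Bnd_ext (Bnd_add hb' hrest) => p r.
rewrite !coef2E /proj2 big_filter [in RHS]big_mkcond -big_split; apply: eq_bigr => t _ /=.
by rewrite !H1E; case: ifP => _ /=; ring.
Qed.

Definition PsiF (u : chain1 H) p r := \sum_(t <- u) t.1 * w t.2 (- t.2) p r.

Lemma PsiF_cat u u' p r : PsiF (u ++ u') p r = PsiF u p r + PsiF u' p r.
Proof. by rewrite /PsiF big_cat. Qed.

Lemma wneg v p r : w v (- v) p r = (r == - p)%:R * ((v == p)%:R - (v == - p)%:R).
Proof.
have e1 : ((v == p) && (- v == r)) = ((r == - p) && (v == p)).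
  by case: (v =P p) => [->|]; rewrite ?andbF ?andbT // eq_sym.
have e2 : ((v == r) && (- v == p)) = ((r == - p) && (v == - p)).
  case: (v =P r) => [->|nv]; first by rewrite eqr_oppLR andbb.
  apply/esym/negbTE/negP => /andP[/eqP e /eqP e']; apply: nv; by rewrite e' e.
by rewrite /w e1 e2 !castA; ring.
Qed.

Lemma PsiF_coef u p r : PsiF u p r = (r == - p)%:R * (coef1 u p - coef1 u (- p)).
Proof.
rewrite /PsiF !coef1E -sumrB mulr_sumr; apply: eq_bigr => t _; rewrite wneg; ring.
Qed.

Lemma PsiF_tens rr p r : PsiF (tens_rel rr) p r =
  \sum_(s <- rr) s.1.1 * (E0 (s.1.2 + s.2) p r - E0 s.1.2 p r - E0 s.2 p r).
Proof.
elim: rr => [|[[q x] y] rr IH]; first by rewrite /PsiF /= !big_nil.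
rewrite big_cons -IH -cat1s tens_rel_cat PsiF_cat; congr (_ + _).
by rewrite /tens_rel /= /PsiF !big_cons big_nil /= /E0; ring.
Qed.

Lemma PsiF_fmap c p r : PsiF (fmap c) p r =
  \sum_(t <- c) (if t.1.2 + t.2 == 0 then t.1.1 * w t.1.2 t.2 p r else 0).
Proof.
elim: c => [|[[q x] y] c IH]; first by rewrite /PsiF /= !big_nil.
rewrite big_cons -IH /fmap /= -/(fmap c) PsiF_cat; congr (_ + _).
have [e|ne] := eqVneq (x + y) 0; last by rewrite /PsiF big_nil.
have -> : y = - x by apply/eqP; rewrite -addr_eq0 addrC e.
by rewrite /PsiF !big_cons big_nil /= opprK (w_anti (- x)); field.
Qed.

Lemma Scancel (c : chain2 H) x1 (hcyc : forall a, coef1 (d2 form c) a = 0) G :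
  \sum_(t <- c) (if t.1.2 + t.2 != 0 then
     t.1.1 * br t.1.2 (t.1.2 + t.2) / br x1 (t.1.2 + t.2) * ((t.1.2 + t.2) == G)%:R else 0) = 0.
Proof.
have [->|nG] := eqVneq G 0.
  by apply: big1 => t _; case: ifP => // h; rewrite (negbTE h) mulr0.
transitivity ((\sum_(t <- c) (if t.1.2 + t.2 == G then t.1.1 * br t.1.2 t.2 else 0)) / br x1 G).
  rewrite mulr_suml; apply: eq_bigr => t _.
  have [e|ne] := eqVneq (t.1.2 + t.2) G.
    by rewrite e nG /= mulr1 -e brDr brxx add0r.
  by rewrite mul0r; case: ifP => _; rewrite ?mulr0.
by have := hcyc G; rewrite /coef1 /d2 big_map /= => ->; rewrite mul0r.
Qed.

Lemma wx1 a g p r : w a (g - a) p r = (a == p)%:R * (g == r + a)%:R - (a == r)%:R * (g == p + a)%:R.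
Proof. by rewrite /w !castA !subr_eq. Qed.

Lemma P2c c : cycle2 form (H1 form) c -> tzero (fmap c) -> bound2 form (H1 form) c.
Proof.
move=> [hs hcyc] [rr hr].
set s := flatten [seq [:: t.1.2; t.2; t.1.2 + t.2] | t <- c & t.1.2 + t.2 != 0].
have hsnz : all (fun u => u != 0) s.
  apply/allP => u /flattenP [l /mapP [t ht ->]]; move: ht; rewrite mem_filter => /andP [hd ht].
  have /andP [hx hy] : H1 form t.1.2 && H1 form t.2 := allP hs t ht.
  rewrite !H1E in hx hy; by rewrite !inE => /or3P [] /eqP ->.
have [x1 hx1] := avoid hsnz.
have mem : forall t, t \in c -> t.1.2 + t.2 != 0 ->
    [/\ form t.1.2 x1 != 0, form t.2 x1 != 0 & form (t.1.2 + t.2) x1 != 0].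
  move=> t ht hd.
  have hin : forall u, u \in [:: t.1.2; t.2; t.1.2 + t.2] -> u \in s.
    move=> u hu; apply/flattenP; exists [:: t.1.2; t.2; t.1.2 + t.2] => //.
    by apply/mapP; exists t => //; rewrite mem_filter hd ht.
  by split; apply: hx1; apply: hin; rewrite !inE eqxx ?orbT.
suff : Bnd (H1 form) (fun p r => coef2 c p r) by [].
pose rho := fun t : rat * H * H => t.1.1 * br t.1.2 (t.1.2 + t.2) / br x1 (t.1.2 + t.2).
have hG : Bnd (H1 form) (fun p r => \sum_(t <- c) (if t.1.2 + t.2 != 0 then
     t.1.1 * w t.1.2 t.2 p r - rho t * w x1 ((t.1.2 + t.2) - x1) p r else 0)).
  apply: Bnd_sum => t ht.
  have [hd|hd] := boolP (t.1.2 + t.2 != 0); last exact: Bnd0.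
  case: (mem t ht hd) => h1 h2 h3.
  have hx : t.1.2 != 0 := nz_l h1.
  have eg : t.1.2 + t.2 - t.1.2 = t.2 by rewrite addrC addKr.
  have R := @Rlem (t.1.2 + t.2) t.1.2 x1 hx h3 ltac:(by rewrite eg) h1.
  have ha : br x1 (t.1.2 + t.2) != 0 by rewrite br_neq0 form_anti oppr_eq0.
  apply: Bnd_ext (Bnd_scale (t.1.1 / br x1 (t.1.2 + t.2)) R) => p r.
  by rewrite eg /rho; field.
have hPsi : Bnd (H1 form) (fun p r => \sum_(t <- c)
    (if t.1.2 + t.2 == 0 then t.1.1 * w t.1.2 t.2 p r else 0)).
  apply: Bnd_ext (Bnd_sum (s := rr) (fun s _ => Bnd_scale s.1.1 (L1 s.1.2 s.2))) => p r.
  by rewrite -PsiF_fmap PsiF_coef !hr -PsiF_coef PsiF_tens.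
apply: Bnd_ext (Bnd_add hG hPsi) => p r.
have K0 : \sum_(t <- c) (if t.1.2 + t.2 != 0 then rho t * w x1 (t.1.2 + t.2 - x1) p r else 0) = 0.
  transitivity ((x1 == p)%:R * \sum_(t <- c) (if t.1.2 + t.2 != 0 then
       t.1.1 * br t.1.2 (t.1.2 + t.2) / br x1 (t.1.2 + t.2) * ((t.1.2 + t.2) == r + x1)%:R else 0)
     - (x1 == r)%:R * \sum_(t <- c) (if t.1.2 + t.2 != 0 then
       t.1.1 * br t.1.2 (t.1.2 + t.2) / br x1 (t.1.2 + t.2) * ((t.1.2 + t.2) == p + x1)%:R else 0)).
    rewrite !mulr_sumr -sumrB; apply: eq_bigr => t _.
    by case: ifP => _; rewrite ?wx1 /rho; ring.
  by rewrite !Scancel // !mulr0 subrr.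
rewrite coef2E -[RHS]addr0 -[X in _ + X]K0 -!big_split.
by apply: eq_bigr => t _ /=; case: eqP => _ /=; ring.
Qed.

Lemma main_in :
  ((forall z, cycle2 form predT z -> cycle2 form (H1 form) (proj2 form z)) /\
   (forall z, bound2 form predT z -> bound2 form (H1 form) (proj2 form z)) /\
   (forall z', cycle2 form (H1 form) z' ->
      exists z, cycle2 form predT z /\
                bound2 form (H1 form) (sub2 (proj2 form z) z')) /\
   (forall z, cycle2 form predT z -> bound2 form (H1 form) (proj2 form z) ->
      bound2 form predT z)) /\
  (exists f : chain2 H -> chain1 H,
     (forall c c', cycle2 form (H1 form) c -> cycle2 form (H1 form) c' ->
        bound2 form (H1 form) (sub2 c c') -> tzero (sub1 (f c) (f c'))) /\
     (forall (k : rat) c c', cycle2 form (H1 form) c -> cycle2 form (H1 form) c' ->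
        tzero (sub1 (f (add2 (scale2 k c) c')) (scale1 k (f c) ++ f c'))) /\
     (forall c, cycle2 form (H1 form) c -> tzero (f c) -> bound2 form (H1 form) c) /\
     (forall t : chain1 H, exists c, cycle2 form (H1 form) c /\ tzero (sub1 (f c) t))).
Proof.
split; first by split; [exact: P1a | split; [exact: P1b | split; [exact: P1c | exact: P1d]]].
exists fmap; split; first by move=> c c' _ _ [t [_ ht]]; exact: P2a ht.
split; first by move=> k c c' _ _; exact: P2b.
split; first exact: P2c.
exact: P2d.
Qed.

End Work.

Theorem corollary4p2 (H : zmodType) (form : H -> H -> int)
  (form_addl : forall x y z, form (x + y) z = form x z + form y z)
  (form_addr : forall x y z, form x (y + z) = form x y + form x z)
  (form_alt : forall x, form x x = 0)
  (form_nondeg : forall x, (forall y, form x y = 0) -> x = 0) :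
  (* the map H_2(Q[H]) -> H_2(Q[H^(1)]) induced by varpi^(1) is well defined
     and bijective *)
  ((forall z, cycle2 form predT z -> cycle2 form (H1 form) (proj2 form z)) /\
   (forall z, bound2 form predT z -> bound2 form (H1 form) (proj2 form z)) /\
   (forall z', cycle2 form (H1 form) z' ->
      exists z, cycle2 form predT z /\
                bound2 form (H1 form) (sub2 (proj2 form z) z')) /\
   (forall z, cycle2 form predT z -> bound2 form (H1 form) (proj2 form z) ->
      bound2 form predT z)) /\
  (* there is a Q-linear bijection H_2(Q[H^(1)]) -> Q (x)_Z H *)
  (exists f : chain2 H -> chain1 H,
     (forall c c', cycle2 form (H1 form) c -> cycle2 form (H1 form) c' ->
        bound2 form (H1 form) (sub2 c c') -> tzero (sub1 (f c) (f c'))) /\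
     (forall (k : rat) c c', cycle2 form (H1 form) c -> cycle2 form (H1 form) c' ->
        tzero (sub1 (f (add2 (scale2 k c) c')) (scale1 k (f c) ++ f c'))) /\
     (forall c, cycle2 form (H1 form) c -> tzero (f c) -> bound2 form (H1 form) c) /\
     (forall t : chain1 H, exists c, cycle2 form (H1 form) c /\ tzero (sub1 (f c) t))).
Proof. eapply main_in; eassumption. Qed.
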